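(* Let $(X,d)$ be a geodesic metric space whose metric is convex, and let $(A,B)$ be a pair of compact convex subsets of $X$. Then $(A,B)$ has proximal normal structure.
   Context: A geodesic space is one in which any two points are joined by a geodesic segment; a subset is convex if it contains every geodesic segment joining two of its points. For $t\in[0,1]$, $(1-t)y+tz$ denotes a point on a geodesic segment from $y$ to $z$ at distance $t\,d(y,z)$ from $y$. The metric is convex if $d(x,(1-t)y+tz)\le(1-t)d(x,y)+t\,d(x,z)$ for all $x,y,z\in X$, $t\in[0,1]$ (and all such points). Notation: $\operatorname{dist}(A,B)=\inf\{d(x,y):x\in A,y\in B\}$, $\delta(x,A)=\sup\{d(x,y):y\in A\}$, $\delta(A,B)=\sup\{d(x,y):x\in A,y\in B\}$. A pair $(H_1,H_2)$ is proximal if for every $(a,b)\in H_1\times H_2$ there is $(a',b')\in H_1\times H_2$ with $d(a,b')=d(a',b)=\operatorname{dist}(H_1,H_2)$. A convex pair $(K_1,K_2)$ has proximal normal structure if for every closed bounded convex proximal pair $(H_1,H_2)$ with $H_1\subseteq K_1$, $H_2\subseteq K_2$, $\operatorname{dist}(H_1,H_2)=\operatorname{dist}(K_1,K_2)$ and $\delta(H_1,H_2)>\operatorname{dist}(H_1,H_2)$, there exists $(x_1,x_2)\in H_1\times H_2$ with $\delta(x_1,H_2)<\delta(H_1,H_2)$ and $\delta(x_2,H_1)<\delta(H_1,H_2)$. *)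

(* Defs.v *)
From Stdlib Require Import Reals List.
From Coquelicot Require Import Coquelicot.
Open Scope R_scope.

Section MetricDefs.
Context {X : Type} (d : X -> X -> R).

Definition is_metric : Prop :=
  (forall x y, 0 <= d x y) /\
  (forall x y, d x y = 0 <-> x = y) /\
  (forall x y, d x y = d y x) /\
  (forall x y z, d x z <= d x y + d y z).

Definition geodesic (g : R -> X) (y z : X) : Prop :=
  g 0 = y /\ g (d y z) = z /\
  forall s t, 0 <= s <= d y z -> 0 <= t <= d y z -> d (g s) (g t) = Rabs (s - t).

Definition geodesic_space : Prop :=
  forall y z, exists g, geodesic g y z.

(* p is "a" point (1-t)y + tz : a point on some geodesic segment from y to z
   at distance t d(y,z) from y. *)
Definition is_comb (t : R) (y z p : X) : Prop :=
  exists g, geodesic g y z /\ p = g (t * d y z).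

Definition convex_metric : Prop :=
  forall x y z t p, 0 <= t <= 1 -> is_comb t y z p ->
    d x p <= (1 - t) * d x y + t * d x z.

Definition convex_set (C : X -> Prop) : Prop :=
  forall y z g, C y -> C z -> geodesic g y z ->
    forall s, 0 <= s <= d y z -> C (g s).

Definition open_set (U : X -> Prop) : Prop :=
  forall x, U x -> exists eps, 0 < eps /\ forall y, d x y < eps -> U y.

Definition closed_set (C : X -> Prop) : Prop :=
  open_set (fun x => ~ C x).

Definition bounded_set (C : X -> Prop) : Prop :=
  exists r, forall x y, C x -> C y -> d x y <= r.

Definition compact_set (C : X -> Prop) : Prop :=
  forall (I : Type) (U : I -> X -> Prop),
    (forall i, open_set (U i)) ->
    (forall x, C x -> exists i, U i x) ->
    exists l : list I, forall x, C x -> exists i, In i l /\ U i x.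

(* dist(A,B) = inf, delta(x,A) = sup, delta(A,B) = sup, valued in Rbar
   (inf of the empty set is +oo, sup of the empty set is -oo). *)
Definition dist_set (A B : X -> Prop) : Rbar :=
  Glb_Rbar (fun r => exists x y, A x /\ B y /\ r = d x y).

Definition delta_pt (x : X) (A : X -> Prop) : Rbar :=
  Lub_Rbar (fun r => exists y, A y /\ r = d x y).

Definition delta_set (A B : X -> Prop) : Rbar :=
  Lub_Rbar (fun r => exists x y, A x /\ B y /\ r = d x y).

Definition proximal_pair (H1 H2 : X -> Prop) : Prop :=
  forall a b, H1 a -> H2 b ->
    exists a' b', H1 a' /\ H2 b' /\
      Finite (d a b') = dist_set H1 H2 /\ Finite (d a' b) = dist_set H1 H2.

Definition proximal_normal_structure (K1 K2 : X -> Prop) : Prop :=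
  forall H1 H2 : X -> Prop,
    closed_set H1 -> closed_set H2 ->
    bounded_set H1 -> bounded_set H2 ->
    convex_set H1 -> convex_set H2 ->
    proximal_pair H1 H2 ->
    (forall x, H1 x -> K1 x) -> (forall x, H2 x -> K2 x) ->
    dist_set H1 H2 = dist_set K1 K2 ->
    Rbar_lt (dist_set H1 H2) (delta_set H1 H2) ->
    exists x1 x2, H1 x1 /\ H2 x2 /\
      Rbar_lt (delta_pt x1 H2) (delta_set H1 H2) /\
      Rbar_lt (delta_pt x2 H1) (delta_set H1 H2).

End MetricDefs.

(* Main.v *)
Require Import Defs.
From Stdlib Require Import Reals List Lra Classical.
From Coquelicot Require Import Coquelicot.
Open Scope R_scope.

Lemma le_fold_max (l : list nat) (n : nat) : In n l -> (n <= fold_right max 0%nat l)%nat.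
Proof.
  induction l as [|a l IH]; simpl; [tauto|].
  intros [<-|H]; [apply Nat.le_max_l|].
  specialize (IH H). eapply Nat.le_trans; [exact IH| apply Nat.le_max_r].
Qed.

Lemma midpoints (X : Type) (d : X -> X -> R)
  (Hmetric : is_metric d) (Hgeod : geodesic_space d) (Hconv : convex_metric d)
  (P Q : X -> Prop) (D : R) (x0 : X) (Hx0 : P x0) (HPv : convex_set d P)
  (Hb : forall x y, P x -> Q y -> d x y <= D) :
  forall L : list X, exists m c, P m /\ 0 < c <= 1 /\
    forall y x e, Q y -> In x L -> P x -> 0 <= e -> d x y <= D - e -> d m y <= D - c * e.
Proof.
  destruct Hmetric as [Hnn [Hz [Hsym Htri]]].
  induction L as [|x L IH].
  - exists x0, 1. split; [exact Hx0|split; [lra|]]. intros y x e _ [].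
  - destruct IH as [m' [c' [Hm' [Hc' IH]]]].
    destruct (classic (P x)) as [Px|nPx].
    + destruct (Hgeod x m') as [g Hg].
      set (p := g (/2 * d x m')).
      assert (Pp : P p).
      { unfold p. apply (HPv x m' g Px Hm' Hg). specialize (Hnn x m'). lra. }
      exists p, (c' / 2). split; [exact Pp|split; [lra|]].
      intros y z e Qy Hin Pz He Hd.
      assert (Hc : d y p <= (1 - /2) * d y x + /2 * d y m').
      { apply Hconv; [lra|]. exists g. split; [exact Hg|reflexivity]. }
      rewrite (Hsym y p) in Hc. rewrite (Hsym y x) in Hc. rewrite (Hsym y m') in Hc.
      pose proof (Hb x y Px Qy). pose proof (Hb m' y Hm' Qy).
      destruct Hin as [<-|Hin].
      * assert (c' * e <= e) by nra. nra.
      * pose proof (IH y z e Qy Hin Pz He Hd). nra.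
    + exists m', c'. split; [exact Hm'|split; [exact Hc'|]].
      intros y z e Qy Hin Pz He Hd. destruct Hin as [<-|Hin]; [contradiction|].
      eauto.
Qed.

Lemma core (X : Type) (d : X -> X -> R)
  (Hmetric : is_metric d) (Hgeod : geodesic_space d) (Hconv : convex_metric d)
  (P Q K : X -> Prop) (D : R) :
  Defs.compact_set d K -> Defs.closed_set d Q -> (forall y, Q y -> K y) -> convex_set d P ->
  (exists x, P x) -> (forall x y, P x -> Q y -> d x y <= D) ->
  (forall y, Q y -> exists x, P x /\ d x y < D) ->
  exists m r, P m /\ r < D /\ forall y, Q y -> d m y <= r.
Proof.
  intros HK HQc HQK HPv [x0 Hx0] Hb Hprox.
  pose proof Hmetric as [Hnn [Hz [Hsym Htri]]].
  set (U := fun (i : X * nat) y => P (fst i) /\ (~ Q y \/ d (fst i) y < D - / (INR (snd i) + 1))).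
  destruct (HK (X * nat)%type U) as [l Hl].
  - intros [x n] y [HP [HnQ|Hlt]]; simpl in *.
    + destruct (HQc y HnQ) as [eps [Heps He]]. exists eps. split; [exact Heps|].
      intros z Hz'. split; [exact HP|left; simpl; apply He; exact Hz'].
    + exists (D - / (INR n + 1) - d x y). split; [lra|].
      intros z Hz'. split; [exact HP|right; simpl].
      pose proof (Htri x y z). lra.
  - intros y Ky. destruct (classic (Q y)) as [Qy|nQy].
    + destruct (Hprox y Qy) as [x [Px Hxy]].
      destruct (archimed_cor1 (D - d x y)) as [N [HN HN0]]; [lra|].
      exists (x, N). split; [exact Px|right; simpl].
      assert (/ (INR N + 1) < / INR N).
      { apply Rinv_lt_contravar. apply lt_0_INR in HN0. nra. lra. }
      lra.
    + exists (x0, 0%nat). split; [exact Hx0|left; exact nQy].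
  - set (N := fold_right max 0%nat (map snd l)).
    set (eps := / (INR N + 1)).
    assert (Heps : 0 < eps). { unfold eps. apply Rinv_0_lt_compat. pose proof (pos_INR N). lra. }
    destruct (midpoints X d Hmetric Hgeod Hconv P Q D x0 Hx0 HPv Hb (map fst l))
      as [m [c [Pm [Hc Hm]]]].
    exists m, (D - c * eps). split; [exact Pm|split; [nra|]].
    intros y Qy. destruct (Hl y (HQK y Qy)) as [i [Hin [HPi [HnQ|Hlt]]]]; [contradiction|].
    apply (Hm y (fst i) eps Qy); [apply in_map; exact Hin|exact HPi|lra|].
    assert (eps <= / (INR (snd i) + 1)).
    { unfold eps. apply Rinv_le_contravar. pose proof (pos_INR (snd i)). lra.
      apply Rplus_le_compat_r. apply le_INR. apply le_fold_max. apply in_map. exact Hin. }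
    lra.
Qed.

Lemma lub_le (E : R -> Prop) (r : R) : (forall x, E x -> x <= r) -> Rbar_le (Lub_Rbar E) r.
Proof.
  intros H. destruct (Lub_Rbar_correct E) as [_ H2]. apply H2. intros x Ex. simpl. apply H. exact Ex.
Qed.

Theorem mainTheorem8 (X : Type) (d : X -> X -> R)
  (Hmetric : is_metric d) (Hgeod : geodesic_space d) (Hconv : convex_metric d)
  (A B : X -> Prop)
  (HAc : compact_set d A) (HBc : compact_set d B)
  (HAv : convex_set d A) (HBv : convex_set d B) :
  proximal_normal_structure d A B.
Proof.
  pose proof Hmetric as [Hnn [Hz [Hsym Htri]]].
  intros H1 H2 HC1 HC2 HB1 HB2 HV1 HV2 Hprox HS1 HS2 _ Hlt.
  assert (Hne : exists x0 y0, H1 x0 /\ H2 y0).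
  { apply NNPP. intros Hn.
    assert (Rbar_le (delta_set d H1 H2) m_infty).
    { destruct (Lub_Rbar_correct (fun r => exists x y, H1 x /\ H2 y /\ r = d x y)) as [_ H2'].
      apply H2'. intros r [x [y [Hx [Hy _]]]]. exfalso. apply Hn. eauto. }
    pose proof (Rbar_lt_le_trans _ _ _ Hlt H). destruct (dist_set d H1 H2); simpl in *; auto. }
  destruct Hne as [x0 [y0 [Hx0 Hy0]]].
  destruct HB1 as [r1 Hr1]. destruct HB2 as [r2 Hr2].
  assert (Hub : Rbar_le (delta_set d H1 H2) (r1 + d x0 y0 + r2)).
  { apply lub_le. intros r [x [y [Hx [Hy ->]]]].
    pose proof (Hr1 x x0 Hx Hx0). pose proof (Hr2 y0 y Hy0 Hy).
    pose proof (Htri x x0 y). pose proof (Htri x0 y0 y). lra. }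
  assert (HD : exists D, delta_set d H1 H2 = Finite D).
  { destruct (delta_set d H1 H2) as [D| |] eqn:E.
    - eauto.
    - simpl in Hub. contradiction.
    - destruct (dist_set d H1 H2); simpl in Hlt; contradiction. }
  destruct HD as [D HD].
  assert (Hb : forall x y, H1 x -> H2 y -> d x y <= D).
  { intros x y Hx Hy. destruct (Lub_Rbar_correct (fun r => exists x y, H1 x /\ H2 y /\ r = d x y)) as [H _].
    unfold delta_set in HD. rewrite HD in H. apply (H (d x y)). eauto. }
  rewrite HD in Hlt |- *.
  destruct (core X d Hmetric Hgeod Hconv H1 H2 B D HBc HC2 HS2 HV1 (ex_intro _ x0 Hx0) Hb)
    as [m1 [s1 [Hm1 [Hs1 Hm1b]]]].
  { intros y Hy. destruct (Hprox x0 y Hx0 Hy) as [a' [b' [Ha' [Hb' [_ Hd]]]]].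
    exists a'. split; [exact Ha'|]. rewrite <- Hd in Hlt. exact Hlt. }
  destruct (core X d Hmetric Hgeod Hconv H2 H1 A D HAc HC1 HS1 HV2 (ex_intro _ y0 Hy0))
    as [m2 [s2 [Hm2 [Hs2 Hm2b]]]].
  { intros x y Hx Hy. rewrite Hsym. apply Hb; assumption. }
  { intros y Hy. destruct (Hprox y y0 Hy Hy0) as [a' [b' [Ha' [Hb' [Hd _]]]]].
    exists b'. split; [exact Hb'|]. rewrite <- Hd in Hlt. rewrite Hsym. exact Hlt. }
  exists m1, m2. split; [exact Hm1|split; [exact Hm2|split]].
  - apply Rbar_le_lt_trans with (Finite s1); [|exact Hs1].
    apply lub_le. intros r [y [Hy ->]]. apply Hm1b. exact Hy.
  - apply Rbar_le_lt_trans with (Finite s2); [|exact Hs2].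
    apply lub_le. intros r [y [Hy ->]]. apply Hm2b. exact Hy.
Qed.
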